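(* Let $G$ and $H$ be nontrivial finite groups with $\gcd(|G|,|H|)=1$. Then the cyclic graph $\Delta(G\times H)$ is connected and $\mathrm{diam}(\Delta(G\times H))\le 3$.
   Context: For a finite group $X$, the cyclic graph $\Delta(X)$ has vertex set $X^{\#}=X\setminus\{1\}$, and distinct vertices $x,y$ are adjacent if and only if the subgroup $\langle x,y\rangle$ is cyclic. The diameter is the maximum graph distance between two vertices. *)

(* Defs.v *)
From mathcomp Require Import all_boot all_fingroup all_solvable.
Set Implicit Arguments. Unset Strict Implicit. Unset Printing Implicit Defensive.
Local Open Scope group_scope.

Definition cyc_adj (gT : finGroupType) (X : {set gT}) : rel gT :=
  fun x y => [&& x \in X^#, y \in X^#, x != y & cyclic <<[set x; y]>>].

Definition cyc_walk (gT : finGroupType) (X : {set gT}) (x y : gT) (n : nat) : Prop :=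
  exists p : seq gT, [/\ path (cyc_adj X) x p, last x p = y & size p = n].

Definition cyc_connected (gT : finGroupType) (X : {set gT}) : Prop :=
  forall x y, x \in X^# -> y \in X^# -> exists n, cyc_walk X x y n.

Definition cyc_diam_le (gT : finGroupType) (X : {set gT}) (d : nat) : Prop :=
  forall x y, x \in X^# -> y \in X^# -> exists2 n, n <= d & cyc_walk X x y n.

(* Main.v *)
Require Import Defs.
From mathcomp Require Import all_boot all_fingroup all_solvable.
Set Warnings "-notation-overridden".
Set Implicit Arguments. Unset Strict Implicit. Unset Printing Implicit Defensive.
Local Open Scope group_scope.

Section S.
Variables (gT1 gT2 : finGroupType).
Implicit Types x : gT1 * gT2.

Lemma expg_pair x n : x ^+ n = (x.1 ^+ n, x.2 ^+ n).
Proof. elim: n => [|n IH]; first by case: x. by rewrite !expgS IH. Qed.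

Lemma ord_dvd_l (G : {group gT1}) g : g \in G -> #[(g, 1) : gT1 * gT2] %| #|G|.
Proof. by move=> gG; rewrite order_dvdn expg_pair /= expg1n expg_cardG. Qed.

Lemma ord_dvd_r (H : {group gT2}) h : h \in H -> #[(1, h) : gT1 * gT2] %| #|H|.
Proof. by move=> hH; rewrite order_dvdn expg_pair /= expg1n expg_cardG. Qed.

Variables (G : {group gT1}) (H : {group gT2}).
Hypothesis co : coprime #|G| #|H|.

Lemma co_ord g h : g \in G -> h \in H -> coprime #[(g, 1) : gT1 * gT2] #[(1, h) : gT1 * gT2].
Proof.
move=> gG hH; apply: (coprime_dvdl (ord_dvd_l gG)); rewrite coprime_sym.
apply: (coprime_dvdl (ord_dvd_r hH)); by rewrite coprime_sym.
Qed.

Lemma comm_gh g h : commute ((g, 1) : gT1 * gT2) (1, h).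
Proof. by rewrite /commute; congr pair => /=; rewrite ?mulg1 ?mul1g. Qed.

Lemma memK1 g h : g \in G -> h \in H -> ((g, 1) : gT1 * gT2) \in <[(g, h)]>.
Proof.
move=> gG hH; have := cycleMsub (comm_gh g h) (co_ord gG hH).
have -> : ((g, 1) : gT1 * gT2) * (1, h) = (g, h) by congr pair => /=; rewrite ?mulg1 ?mul1g.
by move/subsetP; apply; apply: cycle_id.
Qed.

Lemma memK2 g h : g \in G -> h \in H -> ((1, h) : gT1 * gT2) \in <[(g, h)]>.
Proof.
move=> gG hH; have := cycleMsub (commute_sym (comm_gh g h)).
rewrite coprime_sym => /(_ (co_ord gG hH)).
have -> : ((1, h) : gT1 * gT2) * (g, 1) = (g, h) by congr pair => /=; rewrite ?mulg1 ?mul1g.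
by move/subsetP; apply; apply: cycle_id.
Qed.

Let X := setX G H.
Definition E u v := u = v \/ cyc_adj X u v.

Lemma Ecyc u v w : u \in X^# -> v \in X^# -> u \in <[w]> -> v \in <[w]> -> E u v.
Proof.
move=> uX vX uw vw; case: (eqVneq u v) => [->|neq]; [by left|right].
rewrite /cyc_adj uX vX neq /=.
apply: (cyclicS _ (cycle_cyclic w)); rewrite gen_subG.
by apply/subsetP => z; rewrite !inE => /orP[] /eqP ->.
Qed.

Definition W k x y := exists2 n, n <= k & cyc_walk X x y n.

Lemma W0 x : W 0 x x.
Proof. by exists 0 => //; exists [::]. Qed.

Lemma Wstep k x y z : W k x y -> E y z -> W k.+1 x z.
Proof.
move=> [n le [p [pp lp sp]]] [<-|a]; first by exists n => //; [apply: leqW | exists p].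
exists n.+1 => //; exists (rcons p z); split.
- by rewrite rcons_path pp lp.
- by rewrite last_rcons.
- by rewrite size_rcons sp.
Qed.

Lemma inX g h : ((g, h) \in X^#) = ((g != 1) || (h != 1)) && (g \in G) && (h \in H).
Proof.
rewrite !inE andbA /=; congr (_ && _ && _).
rewrite -negb_and; congr (~~ _); apply/eqP/andP => [[-> ->]|[/eqP -> /eqP ->]] //.
Qed.


Lemma Erefl x : E x x. Proof. by left. Qed.

Hypotheses (ntG : G :!=: 1) (ntH : H :!=: 1).

Lemma diam3 x y : x \in X^# -> y \in X^# -> W 3 x y.
Proof.
case: x => g h; case: y => g' h'.
rewrite !inX => /andP[/andP[nx gG] hH] /andP[/andP[ny gG'] hH'].
have [a aG na] : exists2 a, a \in G & a != 1.
  by case/trivgPn: ntG => a aG na; exists a.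
have [b bH nb] : exists2 b, b \in H & b != 1.
  by case/trivgPn: ntH => b bH nb; exists b.
have V1 u : u \in G -> u != 1 -> ((u, 1) : gT1 * gT2) \in X^#.
  by move=> uG nu; rewrite inX nu uG group1.
have V2 u : u \in H -> u != 1 -> ((1, u) : gT1 * gT2) \in X^#.
  by move=> uH nu; rewrite inX nu uH group1 orbT.
have Vx : ((g, h) : gT1 * gT2) \in X^# by rewrite inX nx gG hH.
have Vy : ((g', h') : gT1 * gT2) \in X^# by rewrite inX ny gG' hH'.
case: (eqVneq g 1) => [g1|ng]; case: (eqVneq h' 1) => [h1|nh'].
-
  subst; rewrite eqxx /= in nx; rewrite eqxx orbF in ny.
  apply: (Wstep (y := (g', 1))); last exact: Erefl.
  apply: (Wstep (y := (g', 1))); last exact: Erefl.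
  apply: Wstep (W0 _) _.
  exact: (Ecyc (w := (g', h)) Vx Vy (memK2 gG' hH) (memK1 gG' hH)).
-
  subst; rewrite eqxx /= in nx.
  apply: (Wstep (y := (1, h'))); last first.
    exact: (Ecyc (w := (g', h')) (V2 _ hH' nh') Vy (memK2 gG' hH') (cycle_id _)).
  apply: (Wstep (y := (a, 1))); last first.
    exact: (Ecyc (w := (a, h')) (V1 _ aG na) (V2 _ hH' nh') (memK1 aG hH') (memK2 aG hH')).
  apply: Wstep (W0 _) _.
  exact: (Ecyc (w := (a, h)) Vx (V1 _ aG na) (memK2 aG hH) (memK1 aG hH)).
-
  subst.
  apply: (Wstep (y := (1, b))); last first.
    exact: (Ecyc (w := (g', b)) (V2 _ bH nb) Vy (memK2 gG' bH) (memK1 gG' bH)).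
  apply: (Wstep (y := (g, 1))); last first.
    exact: (Ecyc (w := (g, b)) (V1 _ gG ng) (V2 _ bH nb) (memK1 gG bH) (memK2 gG bH)).
  apply: Wstep (W0 _) _.
  exact: (Ecyc (w := (g, h)) Vx (V1 _ gG ng) (cycle_id _) (memK1 gG hH)).
- apply: (Wstep (y := (1, h'))); last first.
    exact: (Ecyc (w := (g', h')) (V2 _ hH' nh') Vy (memK2 gG' hH') (cycle_id _)).
  apply: (Wstep (y := (g, 1))); last first.
    exact: (Ecyc (w := (g, h')) (V1 _ gG ng) (V2 _ hH' nh') (memK1 gG hH') (memK2 gG hH')).
  apply: Wstep (W0 _) _.
  exact: (Ecyc (w := (g, h)) Vx (V1 _ gG ng) (cycle_id _) (memK1 gG hH)).
Qed.

End S.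

Theorem lemma4p1 (gT1 gT2 : finGroupType) (G : {group gT1}) (H : {group gT2}) :
  G :!=: 1%g -> H :!=: 1%g -> coprime #|G| #|H| ->
  cyc_connected (setX G H) /\ cyc_diam_le (setX G H) 3.
Proof.
move=> ntG ntH co; split => x y xX yX; have [n le w] := diam3 co ntG ntH xX yX.
  by exists n.
by exists n.
Qed.
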